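(* Let $C\subseteq\mathbb{F}_q^n$ be a constant weight linear code with parity check matrix $H_C$ and associated matroid $\Delta=\Delta(H_C)$, and let $C'$ be a subcode of $C$ with parity check matrix $H_{C'}$ and associated matroid $\Delta'=\Delta(H_{C'})$ (both on the ground set $\{1,\dots,n\}$). If $\sigma\subseteq\mathrm{Supp}(C')$, then $\Delta'|_\sigma=\Delta|_\sigma$. In particular, for every $i$, the $\mathbb{N}^n$-graded Betti numbers satisfy $\beta_{i,\sigma}(R(C'))=\beta_{i,\sigma}(R(C))$.
   Context: A constant weight code is a linear code whose non-zero codewords all have the same number of non-zero coordinates; a subcode is a linear subspace; $\mathrm{Supp}(D)=\{x:\exists d\in D,\ d_x\neq0\}$. For a linear code $D\subseteq\mathbb{F}_q^n$ of dimension $m$, a parity check matrix $H_D$ is an $(n-m)\times n$ matrix with $c\in D$ iff $cH_D^t=0$; $\Delta(H_D)$ is the matroid on $\{1,\dots,n\}$ whose independent sets are the index sets of linearly independent columns of $H_D$, regarded as a simplicial complex; $\Delta|_\sigma$ is the restriction $\{\tau\in\Delta:\tau\subseteq\sigma\}$. For a field $\mathbb{K}$ and $S=\mathbb{K}[x_1,\dots,x_n]$, $R(D)=S/I_{\Delta(H_D)}$ where $I_\Delta=\langle\prod_{e\in\tau}x_e:\tau\notin\Delta\rangle$ is the Stanley-Reisner ideal; $\beta_{i,\sigma}$ (for $\sigma\subseteq\{1,\dots,n\}$, identified with its $0/1$ indicator vector in $\mathbb{N}^n$) is the number of copies of $S(-\sigma)$ in the $i$-th module of the minimal $\mathbb{N}^n$-graded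 free resolution of $R(D)$. *)

(* Defs.v *)
From HB Require Import structures.
From mathcomp Require Import all_boot all_order all_algebra all_field.
Set Implicit Arguments. Unset Strict Implicit. Unset Printing Implicit Defensive.
Import GRing.Theory.
Local Open Scope ring_scope.

(* A linear code D of F^n is represented as the row space of a matrix
   (a generator matrix) D : 'M[F]_(k, n); c \in D  is  (c <= D)%MS. *)

Definition wt (F : fieldType) (n : nat) (c : 'rV[F]_n) : nat :=
  #|[set j : 'I_n | c 0 j != 0]|.

Definition constant_weight (F : fieldType) (n k : nat) (D : 'M[F]_(k, n)) : Prop :=
  exists w : nat, forall c : 'rV[F]_n, (c <= D)%MS -> c != 0 -> wt c = w.

Definition is_parity_check (F : fieldType) (n k r : nat)
    (D : 'M[F]_(k, n)) (H : 'M[F]_(r, n)) : Prop :=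
  (r + \rank D)%N = n /\
  forall c : 'rV[F]_n, (c <= D)%MS <-> c *m H^T = 0.

Definition supp (F : finFieldType) (n k : nat) (D : 'M[F]_(k, n)) : {set 'I_n} :=
  [set x : 'I_n | [exists d : 'rV[F]_n, (d <= D)%MS && (d 0 x != 0)]].

Definition indep_cols (F : fieldType) (n r : nat) (H : 'M[F]_(r, n))
    (tau : {set 'I_n}) : bool :=
  \rank (colsub (fun i : 'I_#|tau| => enum_val i) H) == #|tau|.

Definition matroid (F : fieldType) (n r : nat) (H : 'M[F]_(r, n))
    : {set {set 'I_n}} :=
  [set tau : {set 'I_n} | indep_cols H tau].

Definition restrict (n : nat) (D : {set {set 'I_n}}) (sigma : {set 'I_n})
    : {set {set 'I_n}} :=
  [set tau in D | tau \subset sigma].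

(* beta_{i,sigma}(K[D]) = dim_K Tor_i^S(K[D], K)_sigma, computed by the Koszul
   complex K(x_1..x_n) (x) K[D] in multidegree sigma (a 0/1 vector).
   Its degree-i part has K-basis  e_tau (x) x^(sigma \ tau)  with tau \subset sigma,
   #|tau| = i and x^(sigma\tau) <> 0 in K[D], i.e. sigma \ tau a face of D. *)
Definition kbasis (n : nat) (D : {set {set 'I_n}}) (sigma : {set 'I_n}) (i : nat)
    : {set {set 'I_n}} :=
  [set tau : {set 'I_n} | [&& tau \subset sigma, #|tau| == i & (sigma :\: tau) \in D]].

Definition ksign (K : fieldType) (n : nat) (tau : {set 'I_n}) (j : 'I_n) : K :=
  (-1) ^+ #|[set k in tau | (k < j)%N]|.

(* coefficient of e_u (x) x^(sigma\u) in d(e_tau (x) x^(sigma\tau)) *)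
Definition kcoef (K : fieldType) (n : nat) (tau u : {set 'I_n}) : K :=
  \sum_(j in tau) (if u == tau :\ j then ksign K tau j else 0).

(* Koszul differential from homological degree i to i-1 (row convention). *)
Definition kdiff (K : fieldType) (n : nat) (D : {set {set 'I_n}})
    (sigma : {set 'I_n}) (i : nat)
    : 'M[K]_(#|kbasis D sigma i|, #|kbasis D sigma i.-1|) :=
  \matrix_(a, b)
    (if i is 0 then 0
     else kcoef K (enum_val (A := kbasis D sigma i) a)
                  (enum_val (A := kbasis D sigma i.-1) b)).

(* beta_{i,sigma}(K[D]) = dim ker d_i - rank d_{i+1}. *)
Definition betti (K : fieldType) (n : nat) (D : {set {set 'I_n}})
    (sigma : {set 'I_n}) (i : nat) : nat :=
  (#|kbasis D sigma i| - \rank (kdiff K D sigma i) - \rank (kdiff K D sigma i.+1))%N.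

(* Main.v *)
Require Import Defs.
From HB Require Import structures.
From mathcomp Require Import all_boot all_order all_algebra all_field zify.
From Stdlib Require Import FunctionalExtensionality.
Set Implicit Arguments. Unset Strict Implicit. Unset Printing Implicit Defensive.
Import GRing.Theory.
Local Open Scope ring_scope.
Definition kdiffG (K : fieldType) (n : nat) (kb : nat -> {set {set 'I_n}}) (i : nat)
  : 'M[K]_(#|kb i|, #|kb i.-1|) :=
  \matrix_(a, b)
    (if i is 0 then 0%R
     else kcoef K (enum_val (A := kb i) a) (enum_val (A := kb i.-1) b)).

Definition bettiG (K : fieldType) (n : nat) (kb : nat -> {set {set 'I_n}}) (i : nat) : nat :=
  (#|kb i| - \rank (kdiffG K kb i) - \rank (kdiffG K kb i.+1))%N.

Lemma betti_restrict (K : fieldType) n (D D' : {set {set 'I_n}}) sigma i :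
  restrict D sigma = restrict D' sigma -> betti K D sigma i = betti K D' sigma i.
Proof.
move=> E.
have kbE : kbasis D sigma = kbasis D' sigma.
  apply: functional_extensionality => j; apply/setP => tau; rewrite !inE.
  have: (sigma :\: tau \in restrict D sigma) = (sigma :\: tau \in restrict D' sigma) by rewrite E.
  by rewrite !inE subsetDl !andbT => ->.
change (bettiG K (kbasis D sigma) i = bettiG K (kbasis D' sigma) i).
by rewrite kbE.
Qed.
Definition cset (F : finFieldType) n k (D : 'M[F]_(k, n)) : {set 'rV[F]_n} :=
  [set d : 'rV[F]_n | (d <= D)%MS].

Definition nzset (F : finFieldType) n k (D : 'M[F]_(k, n)) (j : 'I_n) :=
  [set d in cset D | d 0 j != 0].

Lemma coord_count (F : finFieldType) n k (D : 'M[F]_(k, n)) (j : 'I_n) :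
  (#|F| * #|nzset D j| = (#|F| - 1) * #|cset D| * (j \in supp D))%N.
Proof.
case: (boolP (j \in supp D)) => hj; last first.
  rewrite muln0; apply/eqP; rewrite muln_eq0 cards_eq0; apply/orP; right.
  apply/eqP/setP => d; rewrite !inE; apply/negP => /andP [dD dj].
  by move: hj; rewrite inE => /existsP; apply; exists d; rewrite dD.
move: (hj); rewrite inE => /existsP [d0 /andP [d0D d0j]].
set u := (d0 0 j)^-1 *: d0.
have uD : (u <= D)%MS by rewrite scalemx_sub.
have uj : u 0 j = 1 by rewrite /u mxE mulVf.
clearbody u.
set Z := [set d in cset D | d 0 j == 0].
have eN : #|cset D| = (#|F| * #|Z|)%N.
  rewrite -[#|F|]cardsT -cardsX.
  have -> : cset D = [set p.2 + p.1 *: u | p in setX [set: F] Z].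
    apply/setP => d; rewrite inE; apply/idP/imsetP.
      move=> dD; exists (d 0 j, d - d 0 j *: u); last by rewrite addrNK.
      by rewrite !inE /= !mxE uj mulr1 subrr eqxx andbT addmx_sub ?eqmx_opp ?scalemx_sub.
    case=> [[a z]]; rewrite !inE /= => /andP [zD _] ->.
    by rewrite addmx_sub ?scalemx_sub.
  rewrite card_in_imset // => [[a z]] [b y]; rewrite !inE /= => /andP [_ zj] /andP [_ yj] E.
  have eab : a = b.
    by move/(congr1 (fun v : 'rV_n => v 0 j)): E; rewrite !mxE uj !mulr1 (eqP zj) (eqP yj) !add0r.
  by subst b; move/addIr: E => ->.
have eS : #|nzset D j| = (#|cset D| - #|Z|)%N.
  rewrite -(cardsID [set d : 'rV[F]_n | d 0 j == 0] (cset D)).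
  have -> : cset D :&: [set d : 'rV[F]_n | d 0 j == 0] = Z by apply/setP => d; rewrite !inE.
  have -> : cset D :\: [set d : 'rV[F]_n | d 0 j == 0] = [set d in cset D | d 0 j != 0].
    by apply/setP => d; rewrite !inE andbC.
  by rewrite addKn.
rewrite eS eN muln1 mulnBr mulnBl mul1n mulnA.
have : (1 < #|F|)%N by apply: finNzRing_gt1.
nia.
Qed.

Lemma wt_sum (F : finFieldType) n k (D : 'M[F]_(k, n)) (w : nat) :
  (forall c : 'rV[F]_n, (c <= D)%MS -> c != 0 -> wt c = w) ->
  (#|F| * (w * (#|cset D| - 1)) = (#|F| - 1) * #|cset D| * #|supp D|)%N.
Proof.
move=> cw.
have e1 : (\sum_(d in cset D) wt d = w * (#|cset D| - 1))%N.
  have z0 : (0 : 'rV[F]_n) \in cset D by rewrite inE sub0mx.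
  rewrite (bigD1 0) //= /wt.
  have -> : #|[set j : 'I_n | (0 : 'rV[F]_n) 0 j != 0]| = 0%N.
    by apply/eqP; rewrite cards_eq0; apply/eqP/setP => j; rewrite !inE mxE eqxx.
  rewrite add0n (cardsD1 0 (cset D)) z0 add1n subSS subn0.
  rewrite (eq_bigr (fun _ => w)); last first.
    by move=> d /andP [dD dn]; rewrite inE in dD; rewrite -(cw d dD dn).
  rewrite sum_nat_const mulnC; congr (_ * _)%N; apply: eq_card => d.
  by rewrite unfold_in !inE andbC.
have e2 : (\sum_(d in cset D) wt d = \sum_j #|nzset D j|)%N.
  rewrite /wt; under eq_bigr do rewrite -sum1_card big_mkcond /=.
  rewrite exchange_big /=; apply: eq_bigr => j _.
  rewrite -sum1_card [RHS]big_mkcond [LHS]big_mkcond /=; apply: eq_bigr => d _; rewrite /nzset !inE.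
  by case: (d <= D)%MS.
rewrite -e1 e2 big_distrr /=.
under eq_bigr do rewrite coord_count.
rewrite -big_distrr /= /=.
congr (_ * _)%N; rewrite -[RHS]sum1_card [RHS]big_mkcond; apply: eq_bigr => j _; by case: (j \in supp D).
Qed.

Lemma key (F : finFieldType) n k k' (C : 'M[F]_(k, n)) (C' : 'M[F]_(k', n)) (c : 'rV[F]_n) :
  constant_weight C -> (C' <= C)%MS -> (c <= C)%MS ->
  (forall x, c 0 x != 0 -> x \in supp C') -> (c <= C')%MS.
Proof.
move=> [w cw] sC'C cC hc.
case: (boolP (c <= C')%MS) => // ncC'.
exfalso.
set D2 := (C' + c)%MS.
have sD2 : (D2 <= C)%MS by rewrite addsmx_sub sC'C cC.
have e1 := wt_sum (fun d dD => cw d (submx_trans dD sC'C)).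
have e2 := wt_sum (fun d dD => cw d (submx_trans dD sD2)).
have eS : supp D2 = supp C'.
  apply/setP => x; rewrite !inE; apply/existsP/existsP; last first.
    by case=> d /andP [dD dx]; exists d; rewrite dx andbT (submx_trans dD) // addsmxSl.
  case=> d /andP [/sub_addsmxP [[u1 u2] /= ->] dx].
  case: (boolP (c 0 x != 0)) => cx.
    by move: (hc x cx); rewrite inE => /existsP.
  exists (u1 *m C'); rewrite submxMl /=.
  move: dx; rewrite mxE [X in _ + X]mxE big_ord1.
  by move: cx; rewrite negbK => /eqP ->; rewrite mulr0 addr0.
rewrite eS in e2.
have lt : (#|cset C'| < #|cset D2|)%N.
  apply: proper_card; apply/properP; split.
    by apply/subsetP => d; rewrite !inE => dD; rewrite (submx_trans dD) // addsmxSl.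
  by exists c; rewrite !inE ?addsmxSr.
have ge1 : (1 <= #|cset C'|)%N by apply/card_gt0P; exists 0; rewrite inE sub0mx.
have q2 : (1 < #|F|)%N by apply: finNzRing_gt1.
have w0 : w = 0%N.
  move: e1 e2 lt ge1 q2; move: #|cset C'| #|cset D2| #|F| #|supp C'| => N1 N2 q s.
  move=> e1 e2 lt ge1 q2.
  have h1 : (q * w * N1 = q * (w * (N1 - 1)) + q * w)%N by nia.
  have h2 : (q * w * N2 = q * (w * (N2 - 1)) + q * w)%N by nia.
  rewrite e1 in h1; rewrite e2 in h2.
  have ab : (q * w = (q - 1) * s)%N by nia.
  have : ((q - 1) * s * N1 = (q - 1) * N1 * s + (q - 1) * s)%N by nia.
  move=> E; have Y0 : ((q - 1) * s = 0)%N by rewrite mulnAC in E; move: E; set X := ((q - 1) * s)%N; set Y := (X * N1)%N; lia.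
  move: ab; rewrite Y0 => /eqP; rewrite muln_eq0 => /orP [/eqP q0 | /eqP //]; by rewrite q0 in q2.
have cn0 : c != 0 by apply: contraNneq ncC' => ->; rewrite sub0mx.
move: (cw c cC cn0); rewrite w0 /wt => /eqP; rewrite cards_eq0 => /eqP e.
move/eqP: cn0; apply; apply/rowP => j; rewrite mxE.
by apply/eqP; move/setP: e => /(_ j); rewrite !inE => /negbT; rewrite negbK.
Qed.

Section Indep.
Variables (F : fieldType) (n r : nat) (H : 'M[F]_(r, n)) (tau : {set 'I_n}).
Let f := fun i : 'I_#|tau| => enum_val i.
Let P : 'M[F]_(#|tau|, n) := \matrix_(t, x) ((x == f t)%:R).

Lemma colsubE : colsub f H = H *m P^T.
Proof.
apply/matrixP => i t; rewrite !mxE (bigD1 (f t)) //= big1 ?addr0.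
  by rewrite !mxE eqxx mulr1.
by move=> x xn; rewrite !mxE (negbTE xn) mulr0.
Qed.


Lemma PmxE (u : 'rV[F]_#|tau|) t : (u *m P) 0 (f t) = u 0 t.
Proof.
rewrite !mxE (bigD1 t) //= big1 ?addr0.
  by rewrite !mxE eqxx mulr1.
by move=> s st; rewrite !mxE; case: eqP => [/enum_val_inj E| _]; [rewrite E eqxx in st | rewrite mulr0].
Qed.

Lemma PmxN (u : 'rV[F]_#|tau|) x : x \notin tau -> (u *m P) 0 x = 0.
Proof.
move=> xt; rewrite !mxE big1 // => s _; rewrite !mxE.
case: eqP => [E|_]; last by rewrite mulr0.
by move: xt; rewrite E /f enum_valP.
Qed.

Lemma indepP :
  indep_cols H tau <->
  (forall c : 'rV[F]_n, c *m H^T = 0 -> (forall x, c 0 x != 0 -> x \in tau) -> c = 0).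
Proof.
rewrite /indep_cols colsubE -mxrank_tr trmx_mul trmxK -[_ == _]/(row_free (P *m H^T)) -kermx_eq0.
split.
  move=> /eqP K0 c cH ct.
  pose u := \row_t c 0 (f t).
  have cu : c = u *m P.
    apply/rowP => x; case: (boolP (x \in tau)) => xt.
      have [t ->] : exists t, x = f t by exists (enum_rank_in xt x); rewrite /f enum_rankK_in.
      by rewrite PmxE mxE.
    rewrite PmxN //; apply/eqP; apply: contraR xt; exact: ct.
  have : (u <= kermx (P *m H^T))%MS by apply/sub_kermxP; rewrite mulmxA -cu.
  rewrite K0 submx0 => /eqP u0; by rewrite cu u0 mul0mx.
move=> hyp; apply/eqP/row_matrixP => i; rewrite row0.
set u := row i _.
have uk : u *m (P *m H^T) = 0 by rewrite /u -row_mul mulmx_ker row0.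
have c0 : u *m P = 0.
  apply: hyp; first by rewrite -mulmxA.
  by move=> x; apply: contraR => xt; rewrite PmxN.
by apply/rowP => t; rewrite -PmxE c0 !mxE.
Qed.
End Indep.

Theorem lemma3 (F : finFieldType) (n k k' r r' : nat)
    (C : 'M[F]_(k, n)) (C' : 'M[F]_(k', n))
    (HC : 'M[F]_(r, n)) (HC' : 'M[F]_(r', n)) :
  constant_weight C ->
  is_parity_check C HC ->
  (C' <= C)%MS ->
  is_parity_check C' HC' ->
  forall sigma : {set 'I_n}, sigma \subset supp C' ->
    restrict (matroid HC') sigma = restrict (matroid HC) sigma /\
    (forall (K : fieldType) (i : nat),
        betti K (matroid HC') sigma i = betti K (matroid HC) sigma i).
Proof.
move=> cw [_ pC] sC'C [_ pC'] sigma ss.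
have E : restrict (matroid HC') sigma = restrict (matroid HC) sigma.
  apply/setP => tau; rewrite !inE; case: (boolP (tau \subset sigma)) => ts; rewrite ?andbF // !andbT.
  apply/idP/idP.
    move/indepP => h; apply/indepP => c cH ct.
    apply: h; last exact: ct.
    apply/pC'; apply: (key cw sC'C); first exact/pC.
    by move=> x cx; apply: (subsetP ss); apply: (subsetP ts); apply: ct.
  move/indepP => h; apply/indepP => c cH ct.
  apply: h; last exact: ct.
  by apply/pC; apply: submx_trans sC'C; apply/pC'.
split=> // K i; exact: betti_restrict.
Qed.
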